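(* For the fully online fractional matching problem on arbitrary (not necessarily bipartite) graphs, the Water-Filling algorithm is $(2-\sqrt{2})$-competitive: on every instance, the final fractional matching $x$ produced by Water-Filling satisfies $\sum_{e\in E} x_e \ge (2-\sqrt{2})\cdot \mathrm{OPT}$, where $\mathrm{OPT}$ is the maximum size of a matching in $G$.
   Context: Fully online matching model: an undirected graph $G=(V,E)$ is revealed online. Each step is either the arrival or the deadline of a vertex. When a vertex $v$ arrives, all edges between $v$ and previously arrived vertices are revealed. It is assumed that every neighbor of a vertex $v$ arrives before $v$'s deadline. In the fractional version, the algorithm maintains $x_{uv}\in[0,1]$ for each edge with $x_w:=\sum_{z:(w,z)\in E}x_{wz}\le 1$ for every vertex $w$ (the ''water-level'' of $w$); for an edge $(u,v)$ where $u$ has the earlier deadline, $x_{uv}$ may only be increased at $u$'s deadline, and all decisions are irrevocable. Water-Filling: at the deadline of a vertex $u$, let $N(u)$ be the set of neighbors of $u$ whose deadlines have not yet been reached; while $x_u<1$ and $\min_{v\in N(u)}x_v<1$, continuously increase $x_{uv}$ at equal rates for all $v\in\arg\min_{v\in N(u)}x_v$. *)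

(* Defs.v *)
From HB Require Import structures.
From mathcomp Require Import all_boot all_order all_algebra.
Set Implicit Arguments. Unset Strict Implicit. Unset Printing Implicit Defensive.
Import Order.TTheory GRing.Theory Num.Theory.
Local Open Scope ring_scope.

Definition simple_graph (V : finType) (E : {set {set V}}) : Prop :=
  forall f, f \in E -> #|f| = 2%N.

Definition is_matching (V : finType) (E M : {set {set V}}) : bool :=
  (M \subset E) &&
  [forall f1 in M, forall f2 in M, (f1 != f2) ==> [disjoint f1 & f2]].

Definition max_matching_size (V : finType) (E : {set {set V}}) : nat :=
  \max_(M : {set {set V}} | is_matching E M) #|M|.

Definition arrival (V : Type) (v : V) : V * bool := (v, true).
Definition deadline (V : Type) (v : V) : V * bool := (v, false).

Definition valid_instance (V : finType) (E : {set {set V}}) (sigma : seq (V * bool))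
  : Prop :=
  [/\ uniq sigma,
      (forall v, arrival v \in sigma /\ deadline v \in sigma),
      (forall v, (index (arrival v) sigma < index (deadline v) sigma)%N) &
      (forall u v, [set u; v] \in E ->
          (index (arrival v) sigma < index (deadline u) sigma)%N)].

(* A fractional assignment x_f for each edge f = {u,v} (values off E are irrelevant). *)
Definition fassign (R : numDomainType) (V : finType) := {set V} -> R.

Definition level (R : numDomainType) (V : finType) (E : {set {set V}})
  (x : fassign R V) (w : V) : R :=
  \sum_(f in E | w \in f) x f.

Definition wf_raise (R : realDomainType) (V : finType) (E : {set {set V}})
  (u : V) (N : {set V}) (x : fassign R V) (h : R) : fassign R V :=
  fun f => x f + \sum_(v in N | f == [set u; v])
                    (Num.max (level E x v) h - level E x v).

(* One Water-Filling step at the deadline of u, where N is the set of neighbours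
   of u whose deadlines have not been reached.  The continuous process (raise the
   minimum-level neighbours at equal rates while x_u < 1 and min_{v in N} x_v < 1)
   ends with every v in N at level max(x_v, h) for a common height h, and it stops
   exactly when either x_u reaches 1 (total increase = 1 - x_u, with h <= 1) or
   all neighbours reach level 1 (h = 1, total increase <= 1 - x_u). *)
Definition wf_step (R : realDomainType) (V : finType) (E : {set {set V}})
  (u : V) (N : {set V}) (x x' : fassign R V) : Prop :=
  exists h : R,
    let inc := \sum_(v in N) (Num.max (level E x v) h - level E x v) in
    ((inc = 1 - level E x u /\ h <= 1) \/ (h = 1 /\ inc <= 1 - level E x u)) /\
    x' = wf_raise E u N x h.

Inductive wf_exec (R : realDomainType) (V : finType) (E : {set {set V}})
  : seq (V * bool) -> fassign R V -> fassign R V -> Prop :=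
| wf_exec_nil x : wf_exec E [::] x x
| wf_exec_arr v s x y : wf_exec E s x y -> wf_exec E ((v, true) :: s) x y
| wf_exec_dl u s x x' y :
    wf_step E u [set v | ([set u; v] \in E) && ((v, false) \in s)] x x' ->
    wf_exec E s x' y -> wf_exec E ((u, false) :: s) x y.

Definition water_filling_output (R : realDomainType) (V : finType)
  (E : {set {set V}}) (sigma : seq (V * bool)) (x : fassign R V) : Prop :=
  wf_exec E sigma (fun _ => 0) x.

(* Main.v *)
Require Import Defs.
From HB Require Import structures.
From mathcomp Require Import all_boot all_order all_algebra.
From mathcomp Require Import ring lra.
Set Implicit Arguments. Unset Strict Implicit. Unset Printing Implicit Defensive.
Import Order.TTheory GRing.Theory Num.Theory.
Local Open Scope ring_scope.

Lemma sum_single (R : numDomainType) (I : finType) (P : pred I) (j : I) (c : I -> R) :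
  (forall i, P i -> i = j) -> \sum_(i | P i) c i = if P j then c j else 0.
Proof.
move=> H; case Pj: (P j).
  rewrite (big_pred1 j) // => i; apply/idP/eqP; first exact: H.
  by move=> ->.
rewrite big_pred0 // => i; apply/negbTE/negP => Pi.
by move: (Pi); rewrite (H _ Pi) Pj.
Qed.

Lemma raise_sum (R : realDomainType) (V : finType) (E : {set {set V}}) (u : V)
  (N : {set V}) (x : fassign R V) (h : R) (P : pred {set V}) :
  \sum_(f | P f) wf_raise E u N x h f =
  \sum_(f | P f) x f + \sum_(v in N | P [set u; v]) (Num.max (level E x v) h - level E x v).
Proof.
rewrite /wf_raise big_split /=; congr (_ + _).
rewrite (exchange_big_dep (mem N)) /=; last by move=> f v _ /andP[].
rewrite [RHS]big_mkcondr /=.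
apply: eq_bigr => v vN.
rewrite (sum_single (j := [set u; v])); last by move=> f /andP[_ /andP[_ /eqP]].
by rewrite eqxx vN !andbT.
Qed.

Lemma matching_bound (R : realDomainType) (V : finType) (E : {set {set V}})
  (al : V -> R) (G S : R) :
  simple_graph E -> (forall w, 0 <= al w) -> \sum_w al w <= S -> 0 <= G ->
  (forall a b, [set a; b] \in E -> G <= al a + al b) ->
  G * (max_matching_size E)%:R <= S.
Proof.
move=> sE al0 hS G0 hE.
have S0 : 0 <= S by apply: le_trans hS; apply: sumr_ge0.
rewrite /max_matching_size.
elim/big_ind: _ => //; first by rewrite mulr0.
  by move=> m n hm hn; rewrite /maxn; case: ifP.
move=> M /andP[ME /forall_inP disj].
have tM : trivIset M.
  apply/trivIsetP => A B AM BM AB.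
  by move: (disj A AM) => /forall_inP /(_ B BM) /implyP; apply.
apply: le_trans hS.
have -> : G * #|M|%:R = \sum_(f in M) G by rewrite sumr_const mulr_natr.
apply: (@le_trans _ _ (\sum_(f in M) \sum_(w in f) al w)).
  apply: ler_sum => f fM.
  have fE : f \in E by apply: (subsetP ME).
  have /eqP/cards2P [a [b [ab fab]]] := sE f fE.
  rewrite fab in fE *.
  rewrite big_setU1 ?big_set1 /=; last by rewrite in_set1.
  exact: hE.
rewrite -big_trivIset //.
rewrite [X in _ <= X](bigID (fun w => w \in cover M)) /= lerDl.
by apply: sumr_ge0.
Qed.
Definition GG (R : rcfType) (x : R) : R :=
  x - Num.sqrt 2 * x / 2 + Num.sqrt 2 * x ^+ 2 / 4.
Definition gg (R : rcfType) (x : R) : R := 1 - Num.sqrt 2 * (1 - x) / 2.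

Lemma sqrt2_facts (R : rcfType) :
  Num.sqrt (2:R) * Num.sqrt 2 = 2 /\ 0 < Num.sqrt (2:R).
Proof.
split; first by rewrite -expr2 sqr_sqrtr // ler0n.
by rewrite sqrtr_gt0 ltr0n.
Qed.

Lemma GG_mono (R : rcfType) (x y : R) : 0 <= x -> x <= y -> GG x <= GG y.
Proof.
move=> hx hxy; have [h2 hr] := sqrt2_facts R; rewrite /GG.
set r := Num.sqrt 2 in h2 hr *.
have hr2 : r <= 2 by nra.
have hp : 0 <= (y - x) * (1 - r / 2 + r * (x + y) / 4).
  apply: mulr_ge0; first lra.
  have : 0 <= r * (x + y) by apply: mulr_ge0; lra.
  lra.
nra.
Qed.

Lemma GG_inc (R : rcfType) (x y : R) : x <= y -> GG y - GG x <= gg y * (y - x).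
Proof.
move=> hxy; have [h2 hr] := sqrt2_facts R; rewrite /GG /gg.
set r := Num.sqrt 2 in h2 hr *.
have hs : 0 <= r * (y - x) ^+ 2 by apply: mulr_ge0; [lra | apply: sqr_ge0].
nra.
Qed.

Lemma poly_key (R : rcfType) (a h : R) :
  2 - Num.sqrt 2 <= GG a + (1 - gg h) * (1 - a) + GG h.
Proof.
have [h2 hr] := sqrt2_facts R; rewrite /GG /gg.
set r := Num.sqrt 2 in h2 hr *.
have hs : 0 <= r * (a + h + r - 2) ^+ 2 by apply: mulr_ge0; [lra | apply: sqr_ge0].
have e1 : r * r * a = 2 * a by rewrite h2.
have e2 : r * r * h = 2 * h by rewrite h2.
have e3 : r * r * r = 2 * r by rewrite h2.
nra.
Qed.

Lemma G1 (R : rcfType) : 2 - Num.sqrt 2 <= GG (1:R).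
Proof.
have [h2 hr] := sqrt2_facts R; rewrite /GG.
set r := Num.sqrt 2 in h2 hr *. nra.
Qed.

Definition Gam (R : rcfType) : R := 2 - Num.sqrt 2.

Definition inv (R : rcfType) (V : finType) (E : {set {set V}}) (s : seq (V * bool))
  (x : fassign R V) (al : V -> R) : Prop :=
  [/\ forall f, 0 <= x f,
      forall w, 0 <= al w,
      \sum_w al w <= \sum_(f in E) x f,
      forall w, (w, false) \in s -> GG (level E x w) <= al w &
      forall a b, [set a; b] \in E -> ((a, false) \notin s) || ((b, false) \notin s) ->
        Gam R <= al a + al b].

Lemma step_inv (R : rcfType) (V : finType) (E : {set {set V}}) (u : V)
  (s : seq (V * bool)) (x x' : fassign R V) (al : V -> R) :
  simple_graph E -> uniq ((u, false) :: s) ->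
  inv E ((u, false) :: s) x al ->
  wf_step E u [set v | ([set u; v] \in E) && ((v, false) \in s)] x x' ->
  exists al', inv E s x' al'.
Proof.
move=> sE /andP[us _] [x0 al0 hsum halive hedge] [h H].
move: H => /= [hcase ->].
set N := [set v | _ & _] in hcase *.
have [h2 hr] := sqrt2_facts R.
have L0 : forall w, 0 <= level E x w by move=> w; apply: sumr_ge0 => f _.
have d0 : forall v, 0 <= Num.max (level E x v) h - level E x v.
  by move=> v; rewrite subr_ge0 le_max lexx.
have hle1 : h <= 1 by case: hcase => [[]|[->]].
set hh := Num.max h 0.
have hh0 : 0 <= hh by rewrite le_max lexx orbT.
have hh1 : hh <= 1 by rewrite ge_max hle1 ler01.
have gg1 : gg hh <= 1.
  rewrite /gg; have : 0 <= Num.sqrt (2:R) * (1 - hh) by apply: mulr_ge0; lra.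
  lra.
pose dG v := GG (Num.max (level E x v) h) - GG (level E x v).
have dG0 : forall v, 0 <= dG v.
  by move=> v; rewrite subr_ge0; apply: GG_mono => //; rewrite le_max lexx.
have dGle : forall v, dG v <= gg hh * (Num.max (level E x v) h - level E x v).
  move=> v; rewrite /dG; case: (lerP h (level E x v)) => hv.
    by rewrite !subrr mulr0.
  have e2 : hh = h by apply: max_l; apply: le_trans (ltW hv).
  by rewrite e2; apply: GG_inc; apply: ltW.
set inc := \sum_(v in N) _ in hcase.
have inc0 : 0 <= inc by apply: sumr_ge0 => v _.
have sdG : \sum_(v in N) dG v <= gg hh * inc.
  by rewrite /inc mulr_sumr; apply: ler_sum => v _.
pose gain := inc - \sum_(v in N) dG v.
have gain_lb : (1 - gg hh) * inc <= gain by rewrite /gain; lra.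
have gain0 : 0 <= gain.
  apply: le_trans gain_lb; apply: mulr_ge0 => //; lra.
pose al' := fun w => al w + (if w \in N then dG w else 0) + (if w == u then gain else 0).
have alle : forall w, al w <= al' w.
  move=> w; rewrite /al' -addrA lerDl; apply: addr_ge0.
    by case: ifP.
  by case: ifP.
have uN : (u \in N) = false.
  apply/negbTE; rewrite inE negb_and; apply/orP; right; exact: us.
have Nb : forall b, b \in N -> b != u.
  by move=> b; rewrite inE => /andP[_ bs]; apply/eqP => bu; move: us; rewrite -bu bs.
have key : forall b, b \in N -> Gam R <= al' u + al' b.
  move=> b bN.
  have hu : al' u >= GG (level E x u) + gain.
    rewrite /al' eqxx uN addr0 lerD2r; apply: halive; exact: mem_head.
  have hbs : (b, false) \in s by move: bN; rewrite inE => /andP[].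
  have hb : al' b >= GG (Num.max (level E x b) h).
    rewrite /al' bN (negbTE (Nb b bN)) addr0.
    have := halive b; rewrite in_cons hbs orbT => /(_ isT).
    rewrite /dG; lra.
  have hbh : GG hh <= GG (Num.max (level E x b) h).
    apply: GG_mono => //; rewrite ge_max le_max lexx le_max L0 orbT.
    by [].
  case: hcase => [[ei _]|[eh _]].
    have := poly_key (level E x u) hh.
    rewrite /Gam; rewrite ei in gain_lb; lra.
  have : GG 1 <= GG (Num.max (level E x b) h).
    by apply: GG_mono => //; rewrite eh le_max lexx orbT.
  have := G1 R. have := al0 u. have := alle u. rewrite /Gam. lra.
exists al'; split.
- move=> f; rewrite /wf_raise; apply: addr_ge0 => //; apply: sumr_ge0 => v _.
  exact: d0.
- by move=> w; apply: le_trans (alle w).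
- have sx : \sum_(f in E) wf_raise E u N x h f = \sum_(f in E) x f + inc.
    rewrite raise_sum; congr (_ + _); apply: eq_bigl => v.
    by case vN: (v \in N) => //=; move: vN; rewrite inE => /andP[].
  have sal : \sum_w al' w = \sum_w al w + \sum_(w in N) dG w + gain.
    rewrite /al' big_split big_split /= -!big_mkcond big_pred1_eq //.
  rewrite sx sal /gain; lra.
- move=> w ws.
  have wu : w != u by apply/eqP => wu; move: us; rewrite -wu ws.
  have lev : level E (wf_raise E u N x h) w = level E x w +
      (if w \in N then Num.max (level E x w) h - level E x w else 0).
    rewrite /level raise_sum; congr (_ + _).
    rewrite (sum_single (j := w)).
      case wN: (w \in N) => //=; rewrite in_set2 eqxx orbT andbT.
      have -> : [set u; w] \in E by move: wN; rewrite inE => /andP[].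
      by [].
    by move=> v /andP[vN /andP[_]]; rewrite in_set2 (negbTE wu) /= => /eqP ->.
  rewrite lev /al' (negbTE wu) addr0; case wN: (w \in N).
    have := halive w; rewrite in_cons ws orbT => /(_ isT).
    by rewrite /dG [_ + (_ - _)]addrC subrK; lra.
  by rewrite !addr0; apply: halive; rewrite in_cons ws orbT.
- have claim : forall a b, [set a; b] \in E -> (a, false) \notin s ->
      (b, false) \in (u, false) :: s -> (a, false) \in (u, false) :: s ->
      Gam R <= al' a + al' b.
    move=> a b ab as_ bin ain.
    have au : a = u.
      by move: ain; rewrite in_cons (negbTE as_) orbF xpair_eqE andbT => /eqP.
    subst a.
    move: bin; rewrite in_cons xpair_eqE andbT => /orP[/eqP bu|bs].
      subst b; exfalso; have := sE _ ab; rewrite setUid cards1 //.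
    by apply: key; rewrite inE ab bs.
  move=> a b ab hab.
  case: (boolP (((a, false) \notin (u, false) :: s) || ((b, false) \notin (u, false) :: s))) => hc.
    apply: le_trans (hedge a b ab hc) _; exact: lerD.
  move: hc; rewrite negb_or !negbK => /andP[ain bin].
  case/orP: hab => [as_|bs]; first exact: claim.
  by rewrite addrC; apply: claim => //; rewrite setUC.
Qed.

Lemma exec_inv (R : rcfType) (V : finType) (E : {set {set V}})
  (s : seq (V * bool)) (x y : fassign R V) :
  simple_graph E -> wf_exec E s x y -> uniq s ->
  forall al, inv E s x al -> exists al', inv E [::] y al'.
Proof.
move=> sE; elim => {s x y}.
- by move=> x _ al hi; exists al.
- move=> v s x y _ IH /andP[_ us] al [a b c d e]; apply: (IH us al); split => //.
    by move=> w ws; apply: d; rewrite in_cons ws orbT.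
  move=> a' b' ab hab; apply: e => //.
  by rewrite !in_cons !xpair_eqE !andbF /=.
- move=> u s x x' y st _ IH us al hi.
  have [al' hi'] := step_inv sE us hi st.
  by apply: (IH _ al' hi'); move: us => /andP[].
Qed.

Theorem theorem3p1 (R : rcfType) (V : finType) (E : {set {set V}})
  (sigma : seq (V * bool)) (x : fassign R V) :
  simple_graph E ->
  valid_instance E sigma ->
  water_filling_output E sigma x ->
  (2 - Num.sqrt 2) * (max_matching_size E)%:R <= \sum_(f in E) x f.
Proof.
move=> sE [usig hdl _ _] hw.
have hi0 : inv E sigma (fun _ => 0 : R) (fun _ => 0 : R).
  split => //.
  - by rewrite big1 // big1.
  - move=> w _; rewrite /level big1 // /GG; lra.
  - move=> a b _; have [_ ha] := hdl a; have [_ hb] := hdl b.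
    by rewrite /deadline in ha hb; rewrite ha hb.
have [al [_ al0 hsum _ hedge]] := exec_inv sE hw usig hi0.
have [h2 hr] := sqrt2_facts R.
apply: (matching_bound sE al0 hsum).
  rewrite subr_ge0; nra.
by move=> a b ab; apply: hedge.
Qed.
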